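(* Let $C$ be an $(n,k)$-code (not necessarily MDS) with generator matrix $G$ ($k\times n$) and parity-check matrix $H$ ($(n-k)\times n$). For any $A_1,\dots,A_\ell\subseteq[n]$, $\dim(H_{A_1}\cap\dots\cap H_{A_\ell})=n-k+\sum_{i=1}^\ell\operatorname{rank}(G|_{\bar A_i})-\operatorname{rank}\mathcal H_{A_1,\dots,A_\ell}[G]$.
   Context: For a matrix $V$ with columns indexed by $[n]$ and $A\subseteq[n]$, $V|_A$ is the submatrix of columns in $A$, $V_A$ is their span, and $\bar A=[n]\setminus A$. $\mathcal H_{A_1,\dots,A_\ell}[G]$ is the $(n+\ell k)\times\sum_i|\bar A_i|$ block matrix whose first block row is $(I_n|_{\bar A_1},\dots,I_n|_{\bar A_\ell})$ and below which is the block-diagonal matrix $\operatorname{diag}(G|_{\bar A_1},\dots,G|_{\bar A_\ell})$. *)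

(* Defs.v *)
From HB Require Import structures.
From mathcomp Require Import all_boot all_order all_algebra.
Set Implicit Arguments. Unset Strict Implicit. Unset Printing Implicit Defensive.
Import GRing.Theory.
Local Open Scope ring_scope.

Definition colrestr (F : fieldType) (m n : nat) (V : 'M[F]_(m, n))
    (A : {set 'I_n}) : 'M[F]_(m, #|A|) :=
  colsub (fun j : 'I_#|A| => enum_val j) V.

(* V_A : span of the columns of V in A, represented (mathcomp convention:
   spaces are row spaces) by the matrix whose rows are those columns. *)
Definition colspan (F : fieldType) (m n : nat) (V : 'M[F]_(m, n))
    (A : {set 'I_n}) : 'M[F]_(#|A|, m) := (colrestr V A)^T.

Definition Hmat (F : fieldType) (k n l : nat) (G : 'M[F]_(k, n))
    (A : 'I_l -> {set 'I_n}) :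
    'M[F]_(n + \sum_(i < l) k, \sum_(j < l) #|~: A j|) :=
  col_mx
    (\mxrow_(j < l) colrestr (1%:M : 'M[F]_n) (~: A j))
    (\mxblock_(i < l, j < l)
       (if i == j then colrestr G (~: A j) else 0 : 'M[F]_(k, #|~: A j|))).

(* Main.v *)
Require Import Defs.
From HB Require Import structures.
From mathcomp Require Import all_boot all_order all_algebra zify.
Import GRing.Theory.
Local Open Scope ring_scope.

Set Implicit Arguments. Unset Strict Implicit. Unset Printing Implicit Defensive.
Lemma mxrank_castmx (F : fieldType) m1 m2 n1 n2 (e : (m1 = m2) * (n1 = n2))
  (A : 'M[F]_(m1, n1)) : \rank (castmx e A) = \rank A.
Proof. by case: e => e1 e2; subst; rewrite castmx_id. Qed.

Lemma rank_mxblock_diag (F : fieldType) l (p_ q_ : 'I_l -> nat)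
  (B_ : forall i j, 'M[F]_(p_ i, q_ j)) :
  (forall i j, i != j -> B_ i j = 0) ->
  \rank (\mxblock_(i, j) B_ i j) = (\sum_i \rank (B_ i i))%N.
Proof.
elim: l p_ q_ B_ => [|l IH] p_ q_ B_ hB.
  by move: (\mxblock_(i, j) _); rewrite !big_ord0 => M; rewrite flatmx0 mxrank0.
rewrite mxblock_recul mxrank_castmx big_ord_recl /=.
have -> : \mxrow_j B_ ord0 (lift ord0 j) = 0.
  rewrite -(mxrow0 (q_ := fun j => q_ (lift ord0 j))); apply: eq_mxrow => j.
  by apply: hB; rewrite neq_lift.
have -> : \mxcol_i B_ (lift ord0 i) ord0 = 0.
  rewrite -(mxcol0 (p_ := fun j => p_ (lift ord0 j))); apply: eq_mxcol => j.
  by apply: hB; rewrite eq_sym neq_lift.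
rewrite rank_diag_block_mx IH // => i j ij.
by apply: hB; rewrite (inj_eq (@lift_inj _ ord0)).
Qed.

Lemma colrestrE (F : fieldType) m n (M : 'M[F]_(m, n)) (A : {set 'I_n}) :
  colrestr M A = M *m colrestr 1%:M A.
Proof.
apply/matrixP => i j; rewrite !mxE (bigD1 (enum_val j)) //= !mxE eqxx mulr1.
rewrite big1 ?addr0 // => x /negPf; rewrite !mxE => ->; by rewrite mulr0.
Qed.

Lemma colrestr1_disj (F : fieldType) n (A : {set 'I_n}) :
  (colrestr (1%:M : 'M[F]_n) (~: A))^T *m colrestr 1%:M A = 0.
Proof.
apply/matrixP => c d; rewrite !mxE.
rewrite big1 // => x _; rewrite !mxE.
have := enum_valP c; have := enum_valP d; rewrite in_setC.
case: (eqVneq x (enum_val c)) => [->|]; last by rewrite mul0r.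
case: (eqVneq (enum_val c) (enum_val d)) => [->|]; first by move=> ->.
by rewrite mulr0.
Qed.

Lemma colrestr1_sum (F : fieldType) n (A : {set 'I_n}) :
  colrestr (1%:M : 'M[F]_n) A *m (colrestr 1%:M A)^T
  + colrestr (1%:M : 'M[F]_n) (~: A) *m (colrestr 1%:M (~: A))^T = 1%:M.
Proof.
apply/matrixP => x y; rewrite !mxE.
pose f z := (1%:M : 'M[F]_n) x z * (1%:M : 'M[F]_n) y z.
have e1 : forall B : {set 'I_n}, \sum_(j < #|B|) (colrestr 1%:M B) x j * (colrestr 1%:M B)^T j y = \sum_(z in B) f z.
  by move=> B; rewrite [RHS]big_enum_val; apply: eq_bigr => j _; rewrite /f !mxE.
rewrite !e1.
have <- : \sum_z f z = \sum_(z in A) f z + \sum_(z in ~: A) f z.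
  rewrite (bigID (fun z => z \in A)) /=; congr (_ + _).
  by apply: eq_bigl => z; rewrite in_setC.
have := congr1 (fun M : 'M[F]_n => M x y) (mul1mx (1%:M : 'M[F]_n)); rewrite /= !mxE => <-.
by apply: eq_bigr => z _; rewrite /f !mxE [y == z]eq_sym.
Qed.

Lemma perp_anti (F : fieldType) m n1 n2 (X : 'M[F]_(n1, m)) (Y : 'M[F]_(n2, m)) :
  (Y <= X)%MS -> (kermx X^T <= kermx Y^T)%MS.
Proof.
case/submxP => D ->; apply/sub_kermxP.
by rewrite trmx_mul mulmxA mulmx_ker mul0mx.
Qed.

Lemma perp_cap (F : fieldType) m p q (X : 'M[F]_(p, m)) (Y : 'M[F]_(q, m)) :
  (kermx (X :&: Y)%MS^T :=: kermx X^T + kermx Y^T)%MS.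
Proof.
have s1 : (kermx X^T + kermx Y^T <= kermx (X :&: Y)%MS^T)%MS.
  by rewrite addsmx_sub !perp_anti ?capmxSl ?capmxSr.
apply/eqmx_sym/eqmxP; rewrite -(mxrank_leqif_eq s1).2.
have ecap : (kermx X^T :&: kermx Y^T :=: kermx (X + Y)%MS^T)%MS.
  apply/eqmxP/andP; split.
    apply: submx_trans (perp_anti (_ : (X + Y <= col_mx X Y)%MS)).
      apply/sub_kermxP; rewrite tr_col_mx mul_mx_row.
      have /sub_kermxP -> := capmxSl (kermx X^T) (kermx Y^T).
      by have /sub_kermxP -> := capmxSr (kermx X^T) (kermx Y^T); rewrite row_mx0.
    by rewrite addsmxE.
  by rewrite sub_capmx !perp_anti ?addsmxSl ?addsmxSr.
have h1 := mxrank_sum_cap (kermx X^T) (kermx Y^T).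
have h2 := mxrank_sum_cap X Y.
rewrite ecap in h1; rewrite !mxrank_ker !mxrank_tr in h1 *.
have := rank_leq_col X; have := rank_leq_col Y; have := rank_leq_col (X + Y)%MS.
have := rank_leq_col (X :&: Y)%MS.
move: h1 h2; set a := \rank (_ + _)%MS; lia.
Qed.

Lemma perp_bigcap (F : fieldType) m l (p_ : 'I_l -> nat) (W : forall i, 'M[F]_(p_ i, m)) :
  (kermx (\bigcap_(i < l) <<W i>>)%MS^T :=: \sum_(i < l) kermx (W i)^T)%MS.
Proof.
elim: l p_ W => [|l IH] p_ W.
  rewrite !big_ord0 trmx1.
  have -> : kermx (1%:M : 'M[F]_m) = 0.
    by apply/eqP; rewrite kermx_eq0 row_free_unit unitmx1.
  by [].
rewrite !big_ord_recl.
apply: eqmx_trans (perp_cap _ _) _.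
apply: adds_eqmx; last exact: IH.
by apply/eqmxP; rewrite !perp_anti ?genmxE.
Qed.

Lemma keyK (F : fieldType) n k m (G : 'M[F]_(k, n)) (H : 'M[F]_(m, n))
  (hGH : H *m G^T = 0) (hK : (kermx G^T <= H)%MS) (A : {set 'I_n}) :
  (kermx (colrestr G (~: A))^T *m (colrestr 1%:M (~: A))^T
     :=: kermx (colspan H A)^T *m H)%MS.
Proof.
rewrite /colspan trmxK [colrestr G _]colrestrE [colrestr H _]colrestrE.
set R := colrestr 1%:M A; set Rc := colrestr 1%:M (~: A).
apply/eqmxP/andP; split.
  set y := kermx _ *m Rc^T.
  have yG : y *m G^T = 0.
    by rewrite /y -mulmxA -trmx_mul mulmx_ker.
  have yH : (y <= H)%MS by apply: submx_trans hK; apply/sub_kermxP.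
  rewrite -(mulmxKpV yH); apply: submxMr; apply/sub_kermxP.
  by rewrite mulmxA mulmxKpV // /y -mulmxA colrestr1_disj mulmx0.
set P := kermx (H *m R).
have yR : P *m H *m R = 0 by rewrite -mulmxA mulmx_ker.
have ey : P *m H = P *m H *m Rc *m Rc^T.
  by rewrite -mulmxA -[LHS]mulmx1 -(colrestr1_sum _ A) -/R -/Rc mulmxDr mulmxA yR mul0mx add0r.
rewrite ey; apply: submxMr; apply/sub_kermxP.
by rewrite trmx_mul mulmxA -ey -mulmxA hGH mulmx0.
Qed.

Unset Implicit Arguments. Set Strict Implicit.

Theorem lemma2p3 (F : fieldType) (n k l : nat) (hkn : (k <= n)%N)
    (G : 'M[F]_(k, n)) (H : 'M[F]_(n - k, n))
    (hG : \rank G = k) (hH : \rank H = (n - k)%N) (hGH : G *m H^T = 0)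
    (A : 'I_l -> {set 'I_n}) :
  ((\rank (\bigcap_(i < l) <<colspan H (A i)>>)%MS)%:Z : int)
  = ((n - k)%N)%:Z + (\sum_(i < l) \rank (colrestr G (~: A i)))%N%:Z
      - (\rank (Hmat G A))%:Z.
Proof.
have hHG : H *m G^T = 0.
  by have := congr1 trmx hGH; rewrite trmx_mul trmxK trmx0.
have hK : (kermx G^T <= H)%MS.
  have sHK : (H <= kermx G^T)%MS by apply/sub_kermxP.
  by rewrite -(mxrank_leqif_sup sHK).2 mxrank_ker mxrank_tr hG hH.
rewrite /Hmat -[\rank (col_mx _ _)]mxrank_tr tr_col_mx.
set S := \mxrow_j _; set Bl := \mxblock_(i, j) _.
have rBl : \rank Bl = (\sum_i \rank (colrestr G (~: A i)))%N.
  rewrite rank_mxblock_diag => [|i j /negPf -> //].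
  by apply: eq_bigr => i _; rewrite eqxx.
have ekr : (kermx (row_mx S^T Bl^T) :=: kermx Bl^T :&: kermx S^T)%MS.
  apply/eqmxP/andP; split.
    have := mulmx_ker (row_mx S^T Bl^T); rewrite mul_mx_row -row_mx0.
    by move=> /eq_row_mx [h1 h2]; rewrite sub_capmx; apply/andP; split; apply/sub_kermxP.
  apply/sub_kermxP; rewrite mul_mx_row.
  have /sub_kermxP -> := capmxSl (kermx Bl^T) (kermx S^T).
  by have /sub_kermxP -> := capmxSr (kermx Bl^T) (kermx S^T); rewrite row_mx0.
have f3 := mxrank_mul_ker (kermx Bl^T) S^T.
pose Q i := kermx (colrestr G (~: A i))^T.
pose Rc i := colrestr (1%:M : 'M[F]_n) (~: A i).
have eBT : Bl^T = \mxblock_(i, j)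
   (if j == i then colrestr G (~: A i) else 0 : 'M[F]_(k, #|~: A i|))^T.
  by rewrite /Bl tr_mxblock.
have eST : S^T = \mxcol_i (Rc i)^T by rewrite /S tr_mxrow.
have f5 : (kermx Bl^T *m S^T :=: \sum_i <<Q i *m (Rc i)^T>>)%MS.
  apply/eqmxP/andP; split.
    set u := kermx Bl^T.
    have hu : forall i, submxrow u i *m (colrestr G (~: A i))^T = 0.
      move=> i; have E := mulmx_ker Bl^T.
      rewrite -/u -[u](submxrowK u) eBT mul_mxrow_mxblock in E.
      have := congr1 (fun M => submxrow M i) E.
      rewrite mxrowK submxrow0 => <-; rewrite [RHS](bigD1 i) //= eqxx [X in _ = _ + X]big1 ?addr0 // => j /negPf.
      by rewrite eq_sym => -> /=; rewrite trmx0 mulmx0.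
    rewrite -(submxrowK u) eST mul_mxrow_mxcol.
    apply: summx_sub_sums => i _; rewrite genmxE; apply: submxMr.
    by apply/sub_kermxP; apply: hu.
  pose X := \mxdiag_i Q i.
  have XB : X *m Bl^T = 0.
    rewrite eBT mul_mxdiag_mxblock -(mxblock0 (p_ := fun i => #|~: A i|) (q_ := fun _ => k)).
    apply: eq_mxblock => i j; case: ifP => _; first by rewrite mulmx_ker.
    by rewrite trmx0 mulmx0.
  have : (X *m S^T <= kermx Bl^T *m S^T)%MS by apply: submxMr; apply/sub_kermxP.
  by rewrite eST mul_mxdiag_mxcol (eqmx_col (fun i => Q i *m (Rc i)^T)).
pose P i := kermx (colspan H (A i))^T.
have f6 : (\sum_i <<Q i *m (Rc i)^T>> :=: (\sum_i P i)%MS *m H)%MS.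
  apply: eqmx_trans _ (eqmx_sym (sumsmxMr_gen _ _ _)).
  apply: eqmx_sums => i _.
  apply: eqmx_trans (genmxE _) (eqmx_trans _ (eqmx_sym (genmxE _))).
  exact: keyK.
have hHf : row_free H by rewrite /row_free hH.
have f7 : \rank ((\sum_i P i)%MS *m H) = \rank (\sum_i P i)%MS by rewrite mxrankMfree.
have f8 := perp_bigcap (fun i => colspan H (A i)).
rewrite -/P in f8.
have r8 : \rank (\sum_i P i)%MS = (n - k - \rank (\bigcap_(i < l) <<colspan H (A i)>>)%MS)%N.
  by rewrite -f8 mxrank_ker mxrank_tr.
rewrite f5 f6 f7 r8 in f3.
have f1 := mxrank_ker (row_mx S^T Bl^T).
rewrite ekr in f1.
rewrite mxrank_ker mxrank_tr rBl in f3.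
have b1 := rank_leq_row (row_mx S^T Bl^T).
have b2 := rank_leq_row Bl^T; rewrite mxrank_tr rBl in b2.
have b3 := rank_leq_col (\bigcap_(i < l) <<colspan H (A i)>>)%MS.
move: f1 f3 b1 b2 b3.
set N := (\sum_i _)%N; set r := \rank (\bigcap_(i < l) _)%MS.
set R := \rank (row_mx _ _); set sr := (\sum_i \rank _)%N.
set c := \rank (_ :&: _)%MS.
lia.
Qed.
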